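(* Let $\lambda<\kappa$ be infinite cardinals with $\kappa\le\aleph_\omega$. Then every $(\lambda,\kappa)$-graph contains an $(\aleph_0,\kappa)$-subgraph.
   Context: For infinite cardinals $\lambda<\kappa$, a $(\lambda,\kappa)$-graph is a bipartite graph with bipartition $(A,B)$, $|A|=\lambda$, $|B|=\kappa$, in which every vertex $b\in B$ has infinitely many neighbours in $A$. An $(\aleph_0,\kappa)$-subgraph of such a graph is a subgraph with bipartition $(C,D)$, $C\subseteq A$, $D\subseteq B$, which is itself an $(\aleph_0,\kappa)$-graph. *)

(* Defs.v *)
From HB Require Import structures.
From mathcomp Require Import all_boot all_order all_algebra.
From mathcomp Require Import all_classical.
Set Implicit Arguments. Unset Strict Implicit. Unset Printing Implicit Defensive.
Local Open Scope classical_set_scope.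
Local Open Scope card_scope.

Definition card_lt (T U : Type) (A : set T) (B : set U) : Prop :=
  (A #<= B) /\ ~ (B #<= A).

(* is_aleph n A : |A| = aleph_n.
   aleph_0 = |nat|; aleph_{n+1} = the successor cardinal of aleph_n,
   i.e. the least cardinal strictly above aleph_n. *)
Fixpoint is_aleph (n : nat) (U : Type) (B : set U) : Prop :=
  match n with
  | 0 => B #= [set: nat]
  | n'.+1 => exists (T : Type) (A : set T),
      [/\ is_aleph n' A, card_lt A B &
          forall (Z : Type) (C : set Z), card_lt A C -> B #<= C]
  end.

Definition above_all_alephs (Z : Type) (C : set Z) : Prop :=
  forall n : nat, exists (T : Type) (A : set T), is_aleph n A /\ A #<= C.

(* |B| <= aleph_omega, where aleph_omega = sup_n aleph_n is the least
   cardinal above all aleph_n. *)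
Definition le_aleph_omega (U : Type) (B : set U) : Prop :=
  exists (W : Type) (S : set W),
    [/\ above_all_alephs S,
        (forall (Z : Type) (C : set Z), above_all_alephs C -> S #<= C)
      & B #<= S].

(* A bipartite graph with sides A : set T, B : set U and adjacency E.
   (lam,kap)-graph: |A| = lam, |B| = kap, every b in B has infinitely
   many neighbours in A. *)
Definition nbhd (T U : Type) (A : set T) (E : T -> U -> Prop) (b : U) : set T :=
  A `&` [set a | E a b].

(* Main.v *)
Require Import Defs.
From HB Require Import structures.
From mathcomp Require Import all_boot all_order all_algebra.
From mathcomp Require Import all_classical.
From mathcomp Require Import wochoice.
Local Open Scope classical_set_scope.
Local Open Scope card_scope.
Set Implicit Arguments. Unset Strict Implicit. Unset Printing Implicit Defensive.

Definition injon {T U} (A : set T) (f : T -> U) :=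
  forall x y, A x -> A y -> f x = f y -> x = y.
Definition mapsto {T U} (A : set T) (B : set U) (f : T -> U) :=
  forall x, A x -> B (f x).

Lemma cle_intro T U (A : set T) (B : set U) (f : T -> U) :
  mapsto A B f -> injon A f -> A #<= B.
Proof.
move=> mf inf.
have : $|{injfun A >-> B}|.
  apply/injfunPex; exists f.
    by move=> x Ax; apply: mf.
  by move=> x y /set_mem Ax /set_mem Ay; apply: inf.
by case=> g; apply: inj_card_le.
Qed.

Lemma cle_elim T U (A : set T) (B : set U) :
  A #<= B -> A = set0 \/ exists f : T -> U, mapsto A B f /\ injon A f.
Proof.
case: (pselect (A = set0)) => [A0 _|An]; first by left.
move=> H; right; move: H An.
elim/Ppointed: U => U in B *.
  have -> : B = set0 by apply: empty_eq0.
  by move=> /card_le0P H An; exfalso; apply: An.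
move=> /pcard_leP /injfunPex [g gf gi] _; exists g; split.
  by move=> x Ax; apply: gf.
by move=> x y Ax Ay; apply: gi; apply: mem_set.
Qed.

Lemma nonemptyP T (A : set T) : A <> set0 -> exists x, A x.
Proof.
move=> An; apply: contrapT => nE; apply: An; apply/seteqP; split=> x //= Ax.
by apply: nE; exists x.
Qed.

Lemma cle_elim_ne T U (A : set T) (B : set U) (a : T) :
  A a -> A #<= B -> exists f : T -> U, mapsto A B f /\ injon A f.
Proof.
move=> Aa /cle_elim [A0|//]; by move: Aa; rewrite A0.
Qed.

Lemma cle_trans T U V (A : set T) (B : set U) (C : set V) :
  A #<= B -> B #<= C -> A #<= C.
Proof. by move=> h1 h2; apply: card_le_trans h1 h2. Qed.

Lemma cle_sub T (A B : set T) : A `<=` B -> A #<= B.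
Proof. exact: subset_card_le. Qed.

Lemma cle_refl T (A : set T) : A #<= A.
Proof. exact: card_lexx. Qed.

Lemma cle_img T U (f : T -> U) (A : set T) : f @` A #<= A.
Proof. exact: card_image_le. Qed.

Lemma cle_img_inj T U (f : T -> U) (A : set T) : injon A f -> A #<= f @` A.
Proof.
move=> fi; apply: (cle_intro (f := f)) => // x Ax; by exists x.
Qed.

Lemma cle_prod T1 T2 U1 U2 (A1 : set T1) (A2 : set T2) (B1 : set U1) (B2 : set U2) :
  A1 #<= B1 -> A2 #<= B2 -> A1 `*` A2 #<= B1 `*` B2.
Proof.
case: (pselect (A1 = set0)) => [-> _|/nonemptyP [a1 Aa1]].
  have -> : set0 `*` A2 = set0 :> set (T1 * T2).
    by apply/seteqP; split=> -[a b] //= [].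
  by move=> _; apply: card_ge0.
case: (pselect (A2 = set0)) => [->|/nonemptyP [a2 Aa2]] h1 h2.
  have -> : A1 `*` set0 = set0 :> set (T1 * T2).
    by apply/seteqP; split=> -[a b] //= [].
  by apply: card_ge0.
have [f1 [m1 i1]] := cle_elim_ne Aa1 h1.
have [f2 [m2 i2]] := cle_elim_ne Aa2 h2.
apply: (cle_intro (f := fun p => (f1 p.1, f2 p.2))).
  by move=> [x y] [/= ? ?]; split; [apply: m1|apply: m2].
move=> [x y] [x' y'] [/= ax ay] [/= ax' ay'] [] e1 e2.
by rewrite (i1 _ _ ax ax' e1) (i2 _ _ ay ay' e2).
Qed.

Lemma UL (Ix T Kt : Type) (I : set Ix) (F : Ix -> set T) (K : set Kt) :
  I #<= K -> (forall i, I i -> F i #<= K) -> K `*` K #<= K ->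
  \bigcup_(i in I) F i #<= K.
Proof.
move=> IK FK KK.
case: (pselect (\bigcup_(i in I) F i = set0)) => [->|/nonemptyP [x0 [i0 Ii0 Fx0]]].
  exact: card_ge0.
have [e [me ie]] := cle_elim_ne Ii0 IK.
have k0 : Kt := e i0.
have Kk : K (e i0) by apply: me.
have [m [mm im]] := cle_elim_ne (a := (e i0, e i0)) (conj Kk Kk) KK.
have : forall i, exists f : T -> Kt, I i -> mapsto (F i) K f /\ injon (F i) f.
  move=> i; case: (pselect (I i)) => Ii; last by exists (fun _ => k0).
  case/cle_elim: (FK i Ii) => [F0|[f hf]]; last by exists f.
  by exists (fun _ => k0) => _; rewrite F0; split => x.
case/choice => fF hF.
have : forall x, exists i, (\bigcup_(i in I) F i) x -> I i /\ F i x.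
  move=> x; case: (pselect ((\bigcup_(i in I) F i) x)) => [[i Ii Fx]|nx].
    by exists i.
  by exists i0.
case/choice => j hj.
apply: (cle_intro (f := fun x => m (e (j x), fF (j x) x))).
  move=> x /hj [Ij Fj]; apply: mm; split => /=; first exact: me.
  by have [+ _] := hF _ Ij; apply.
move=> x y /hj [Ijx Fjx] /hj [Ijy Fjy] /im h.
have := h (conj (me _ Ijx) ((hF _ Ijx).1 _ Fjx)) (conj (me _ Ijy) ((hF _ Ijy).1 _ Fjy)).
case=> /ie -/(_ Ijx Ijy) ejxy.
rewrite ejxy in Fjx Ijx *.
by apply: (hF _ Ijy).2.
Qed.

Lemma union2 (T Kt : Type) (A1 A2 : set T) (K : set Kt) :
  A1 #<= K -> A2 #<= K -> [set: nat] #<= K -> K `*` K #<= K ->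
  A1 `|` A2 #<= K.
Proof.
move=> h1 h2 nK KK.
have bK : [set: bool] #<= K.
  apply: cle_trans nK; apply: (cle_intro (f := nat_of_bool)) => //.
  by move=> [] [] _ _.
apply: cle_trans (UL (F := fun b : bool => if b then A1 else A2) bK _ KK).
  apply: cle_sub => x [A1x|A2x]; [by exists true | by exists false].
by move=> [] _.
Qed.


Lemma zorn_sets (V : Type) (P : set V -> Prop) :
  (exists r0, P r0) ->
  (forall C : set (set V), (exists r, C r) -> (forall r, C r -> P r) ->
     (forall r s, C r -> C s -> r `<=` s \/ s `<=` r) ->
     P (\bigcup_(r in C) r)) ->
  exists r, P r /\ forall s, P s -> r `<=` s -> s `<=` r.
Proof.
move=> [r0 Pr0] HC.
pose R : rel (V -> Prop) := fun a b => `[< a `<=` b >].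
pose S : {pred (V -> Prop)} := fun r => `[< P r >].
have := @Zorn's_lemma (V -> Prop) R S.
case.
- by move=> x _; apply/asboolP.
- move=> y x z _ _ _ /asboolP h1 /asboolP h2; apply/asboolP => v /h1; exact: h2.
- move=> C CS wC.
  have ch := wo_chainW wC.
  case: (pselect (exists r, r \in C)) => [[r1 Cr1]|nC]; last first.
    exists r0; first by rewrite /S unfold_in; apply/asboolP.
    by move=> x Cx; exfalso; apply: nC; exists x.
  exists (\bigcup_(r in [set r | r \in C]) r).
    rewrite /S unfold_in; apply/asboolP; apply: HC.
    - by exists r1.
    - by move=> r /= Cr; have := CS r Cr; rewrite /S unfold_in => /asboolP.
    - move=> r s /= Cr Cs; case/orP: (ch r s Cr Cs) => /asboolP; by [left|right].
  by move=> x Cx; apply/asboolP => v xv; exists x.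
- move=> z; rewrite /S unfold_in => /asboolP Pz mz; exists z; split => // s Ps zs.
  have Ss : s \in S by rewrite /S unfold_in; apply/asboolP.
  have Rzs : R z s by apply/asboolP.
  by have /asboolP := mz s Ss Rzs.
Qed.

Lemma cle_of_rel T U (A : set T) (B : set U) (r : set (T * U)) :
  (forall p, r p -> B p.2) ->
  (forall x x' y, r (x, y) -> r (x', y) -> x = x') ->
  (forall x, A x -> exists y, r (x, y)) -> A #<= B.
Proof.
move=> rB rinj rtot.
case: (pselect (A = set0)) => [->|/nonemptyP [a Aa]]; first exact: card_ge0.
have [y0 _] := rtot a Aa.
have : forall x, exists y, A x -> r (x, y).
  move=> x; case: (pselect (A x)) => Ax; last by exists y0.
  by have [y rxy] := rtot x Ax; exists y.
case/choice => f hf.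
apply: (cle_intro (f := f)).
  by move=> x Ax; apply: (rB (x, f x)); apply: hf.
move=> x x' Ax Ax' e; apply: (rinj x x' (f x)); first exact: hf.
by rewrite e; apply: hf.
Qed.

Lemma cmp T U (A : set T) (B : set U) : A #<= B \/ B #<= A.
Proof.
pose P (r : set (T * U)) :=
  [/\ (forall p, r p -> A p.1 /\ B p.2),
      (forall x y y', r (x, y) -> r (x, y') -> y = y') &
      (forall x x' y, r (x, y) -> r (x', y) -> x = x')].
have [r [[rAB rf ri] rmax]] : exists r, P r /\ forall s, P s -> r `<=` s -> s `<=` r.
  apply: zorn_sets.
    by exists set0; split.
  move=> C _ CP Cch; split.
  - by move=> p [r Cr rp]; have [+ _ _] := CP r Cr; apply.
  - move=> x y y' [r1 Cr1 h1] [r2 Cr2 h2].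
    case: (Cch r1 r2 Cr1 Cr2) => s12.
      by have [_ f _] := CP r2 Cr2; apply: (f x y y') => //; apply: s12.
    by have [_ f _] := CP r1 Cr1; apply: (f x y y') => //; apply: s12.
  - move=> x x' y [r1 Cr1 h1] [r2 Cr2 h2].
    case: (Cch r1 r2 Cr1 Cr2) => s12.
      by have [_ _ f] := CP r2 Cr2; apply: (f x x' y) => //; apply: s12.
    by have [_ _ f] := CP r1 Cr1; apply: (f x x' y) => //; apply: s12.
case: (pselect (forall x, A x -> exists y, r (x, y))) => [hA|nA].
  left; apply: (cle_of_rel (r := r)).
  - by move=> p /rAB [].
  - exact: ri.
  - exact: hA.
case: (pselect (forall y, B y -> exists x, r (x, y))) => [hB|nB].
  right; apply: (cle_of_rel (r := [set p | r (p.2, p.1)])).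
  - by move=> p /rAB [].
  - by move=> x x' y; apply: rf.
  - by move=> y /hB [x rxy]; exists x.
exfalso.
have [x [Ax nx]] : exists x, A x /\ ~ exists y, r (x, y).
  apply: contrapT => h; apply: nA => x Ax; apply: contrapT => nx; apply: h.
  by exists x.
have [y [By ny]] : exists y, B y /\ ~ exists x, r (x, y).
  apply: contrapT => h; apply: nB => y By; apply: contrapT => ny; apply: h.
  by exists y.
have : r `|` [set (x, y)] `<=` r.
  apply: rmax; last by move=> p rp; left.
  split.
  - by move=> p [/rAB //| ->].
  - move=> a b b' [h1|/= e1] [h2|/= e2].
    + exact: rf h1 h2.
    + by case: e2 => e ->; exfalso; apply: nx; exists b; rewrite -e.
    + by case: e1 => e ->; exfalso; apply: nx; exists b'; rewrite -e.
    + by case: e1 => _ ->; case: e2 => _ ->.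
  - move=> a a' b [h1|/= e1] [h2|/= e2].
    + exact: ri h1 h2.
    + by case: e2 => -> e; exfalso; apply: ny; exists a; rewrite -e.
    + by case: e1 => -> e; exfalso; apply: ny; exists a'; rewrite -e.
    + by case: e1 => -> _; case: e2 => -> _.
by move=> /(_ (x, y)) h; apply: ny; exists x; apply: h; right.
Qed.


Section Hess.
Variables (T : Type) (X : set T).

Definition Yr (r : set ((T * T) * T)) : set T := [set a | exists z, r ((a, a), z)].

Record HP (r : set ((T * T) * T)) : Prop := HPI {
  hp1 : Yr r `<=` X; hp2 : [set: nat] #<= Yr r;
  hp3 : forall a b z, r ((a, b), z) -> [/\ Yr r a, Yr r b & Yr r z];
  hp4 : forall a b, Yr r a -> Yr r b -> exists z, r ((a, b), z);
  hp5 : forall p z z', r (p, z) -> r (p, z') -> z = z';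
  hp6 : forall p p' z, r (p, z) -> r (p', z) -> p = p' }.

Lemma HP_sq r : HP r -> Yr r `*` Yr r #<= Yr r.
Proof.
move=> [_ _ h3 h4 h5 h6]; apply: (cle_of_rel (r := r)).
- by move=> [p z] /= rpz; case: p rpz => a b /h3 [].
- by move=> p p' z; apply: h6.
- by move=> [a b] [/= Ya Yb]; apply: h4.
Qed.

End Hess.

Lemma hessenberg T (X : set T) : [set: nat] #<= X -> X `*` X #<= X.
Proof.
move=> nX.
have [r [Pr rmax]] : exists r, HP X r /\ forall s, HP X s -> r `<=` s -> s `<=` r.
  apply: zorn_sets.
  -
    have [g [mg ig]] := cle_elim_ne (a := 0%N) I nX.
    pose Y0 := g @` [set: nat].
    have Y0n : [set: nat] #<= Y0 by apply: cle_img_inj => x y _ _; apply: ig.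
    have Y0sq : Y0 `*` Y0 #<= Y0.
      apply: cle_trans (cle_prod (cle_img g setT) (cle_img g setT)) _.
      apply: cle_trans Y0n.
      have -> : [set: nat] `*` [set: nat] = [set: nat * nat] by apply/seteqP; split.
      by case/card_eqPle: card_nat2.
    have Yg0 : Y0 (g 0%N) by exists 0%N.
    have [k [mk ik]] := cle_elim_ne (a := (g 0%N, g 0%N)) (conj Yg0 Yg0) Y0sq.
    pose r0 := [set q : (T * T) * T | [/\ Y0 q.1.1, Y0 q.1.2 & q.2 = k q.1]].
    have Yr0 : Yr r0 = Y0.
      apply/seteqP; split => a /=.
        by move=> [z [] ].
      by move=> Ya; exists (k (a, a)).
    exists r0; split; rewrite ?Yr0 //.
    + by move=> _ [n _ <-]; apply: mg.
    + by move=> a b z [/= Ya Yb ->]; split => //; apply: (mk (a, b)).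
    + by move=> a b Ya Yb; exists (k (a, b)).
    + by move=> p z z' [_ _ /= ->] [_ _ /= ->].
    + move=> [a b] [a' b'] z [/= Ya Yb ->] [/= Ya' Yb' e].
      by apply: ik => //; rewrite e.
  -
    move=> C [r1 Cr1] CP Cch.
    have YrU a : Yr (\bigcup_(r in C) r) a <-> exists2 r, C r & Yr r a.
      split; first by move=> [z [r Cr rz]]; exists r => //; exists z.
      by move=> [r Cr [z rz]]; exists z; exists r.
    split.
    + by move=> a /YrU [r Cr]; have [+ _ _ _ _ _] := CP r Cr; apply.
    + have [_ + _ _ _ _] := CP r1 Cr1; move=> h; apply: cle_trans h _.
      by apply: cle_sub => a Ya; apply/YrU; exists r1.
    + move=> a b z [r Cr rz]; have [_ _ h _ _ _] := CP r Cr.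
      have [Ya Yb Yz] := h _ _ _ rz.
      by split; apply/YrU; exists r.
    + move=> a b /YrU [ra Cra Ya] /YrU [rb Crb Yb].
      case: (Cch ra rb Cra Crb) => s.
        have [_ _ _ h _ _] := CP rb Crb.
        have Ya' : Yr rb a by case: Ya => z rz; exists z; apply: s.
        by have [z rz] := h a b Ya' Yb; exists z; exists rb.
      have [_ _ _ h _ _] := CP ra Cra.
      have Yb' : Yr ra b by case: Yb => z rz; exists z; apply: s.
      by have [z rz] := h a b Ya Yb'; exists z; exists ra.
    + move=> p z z' [r1' C1 h1] [r2 C2 h2].
      case: (Cch r1' r2 C1 C2) => s.
        by have [_ _ _ _ f _] := CP r2 C2; apply: (f p) => //; apply: s.
      by have [_ _ _ _ f _] := CP r1' C1; apply: (f p) => //; apply: s.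
    + move=> p p' z [r1' C1 h1] [r2 C2 h2].
      case: (Cch r1' r2 C1 C2) => s.
        by have [_ _ _ _ _ f] := CP r2 C2; apply: (f p p' z) => //; apply: s.
      by have [_ _ _ _ _ f] := CP r1' C1; apply: (f p p' z) => //; apply: s.
set Y := Yr r.
have [YX nY h3 h4 h5 h6] := Pr.
have YY : Y `*` Y #<= Y := HP_sq Pr.
case: (cmp Y (X `\` Y)) => [YXY|XYY]; last first.
  have XY : X #<= Y.
    apply: cle_trans (union2 (cle_refl Y) XYY nY YY).
    by apply: cle_sub => x Xx; case: (pselect (Y x)) => Yx; [left|right].
  apply: cle_trans (cle_prod XY XY) _; apply: cle_trans YY _.
  exact: cle_sub.
exfalso.
have [y0 Yy0] : exists y, Y y.
  have [g [mg _]] := cle_elim_ne (A := [set: nat]) (B := Yr r) (a := 0%N) I nY.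
  by exists (g 0%N); apply: mg.
have [g [mg ig]] := cle_elim_ne Yy0 YXY.
pose Z := g @` Y.
have ZX : Z `<=` X `\` Y by move=> _ [y Yy <-]; apply: mg.
have ZY : Z #<= Y := cle_img g Y.
have YZ : Y #<= Z := cle_img_inj ig.
pose W := [set p : T * T | [/\ Y p.1 \/ Z p.1, Y p.2 \/ Z p.2 & ~ (Y p.1 /\ Y p.2)]].
have WY : W #<= Y.
  have h1 : Y `*` Z #<= Y by apply: cle_trans (cle_prod (cle_refl Y) ZY) YY.
  have h2 : Z `*` Y #<= Y by apply: cle_trans (cle_prod ZY (cle_refl Y)) YY.
  have h3' : Z `*` Z #<= Y by apply: cle_trans (cle_prod ZY ZY) YY.
  apply: cle_trans (union2 h1 (union2 h2 h3' nY YY) nY YY).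
  apply: cle_sub => -[a b] [/= [Ya|Za] [Yb|Zb] nYY].
  - by exfalso; apply: nYY.
  - by left.
  - by right; left.
  - by right; right.
have WZ : W #<= Z := cle_trans WY YZ.
have [z0 Zz0] : exists z, Z z by exists (g y0); exists y0.
have Wz0 : W (z0, z0).
  by split => /=; [right|right|move=> [Yz _]; case: (ZX _ Zz0)].
have [h [mh ih]] := cle_elim_ne Wz0 WZ.
pose r' := r `|` [set q | W q.1 /\ q.2 = h q.1].
have YZd a : Z a -> ~ Y a by move=> /ZX [].
have Yr' a : Yr r' a <-> Y a \/ Z a.
  split.
    move=> [z [rz|[Wa _]]]; first by left; exists z.
    by case: Wa => /= [[Ya|Za] _ nY2]; [left|right].
  move=> [Ya|Za]; first by case: Ya => z rz; exists z; left.
  exists (h (a, a)); right; split => //=.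
  by split => /=; [right|right|move=> [/YZd]].
have : r' `<=` r.
  apply: rmax; last by move=> q rq; left.
  split.
  - move=> a /Yr' [Ya|Za]; first exact: YX.
    by have [] := ZX _ Za.
  - by apply: cle_trans nY _; apply: cle_sub => a Ya; apply/Yr'; left.
  - move=> a b z [rz|[Wab /= ->]].
      have [Ya Yb Yz] := h3 _ _ _ rz.
      by split; apply/Yr'; left.
    case: (Wab) => /= Ha Hb _; split; apply/Yr' => //.
    by right; apply: mh.
  - move=> a b /Yr' Ha /Yr' Hb.
    case: (pselect (Y a /\ Y b)) => [[Ya Yb]|nYab].
      by have [z rz] := h4 _ _ Ya Yb; exists z; left.
    by exists (h (a, b)); right; split.
  - move=> [a b] z z' [rz|[Wp /= ->]] [rz'|[Wp' /= ->]].
    + exact: h5 rz rz'.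
    + have [Ya Yb _] := h3 _ _ _ rz.
      by case: Wp' => _ _ /=; case; split.
    + have [Ya Yb _] := h3 _ _ _ rz'.
      by case: Wp => _ _ /=; case; split.
    + by [].
  - move=> [a b] [a' b'] z [rz|[Wp /= ez]] [rz'|[Wp' /= ez']].
    + exact: h6 rz rz'.
    + have [_ _ Yz] := h3 _ _ _ rz.
      by exfalso; apply: (YZd z); [rewrite ez'; apply: mh | ].
    + have [_ _ Yz] := h3 _ _ _ rz'.
      by exfalso; apply: (YZd z); [rewrite ez; apply: mh | ].
    + by apply: ih => //; rewrite -ez -ez'.
move=> /(_ ((z0, z0), h (z0, z0))) H.
have : r ((z0, z0), h (z0, z0)) by apply: H; right; split.
move=> rz; have [Yz0 _ _] := h3 _ _ _ rz.
exact: YZd Zz0 Yz0.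
Qed.


Lemma aleph_inf n T (K : set T) : is_aleph n K -> [set: nat] #<= K.
Proof.
elim: n T K => [|n IH] T K /=.
  by case/card_eqPle.
by move=> [T' [A [hA [AK _] _]]]; apply: cle_trans (IH _ _ hA) AK.
Qed.

Lemma aleph_le n T U (K1 : set T) (K2 : set U) :
  is_aleph n K1 -> is_aleph n K2 -> K1 #<= K2.
Proof.
elim: n T U K1 K2 => [|n IH] T U K1 K2 /=.
  by move=> /card_eqPle [h1 _] /card_eqPle [_ h2]; apply: cle_trans h1 h2.
move=> [T1 [A1 [hA1 _ min1]]] [T2 [A2 [hA2 [A2K2 nK2A2] _]]].
apply: min1; split.
  exact: cle_trans (IH _ _ _ _ hA1 hA2) A2K2.
by move=> K2A1; apply: nK2A2; apply: cle_trans K2A1 (IH _ _ _ _ hA1 hA2).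
Qed.

Lemma aleph_sq n T (K : set T) : is_aleph n K -> K `*` K #<= K.
Proof. by move=> /aleph_inf; apply: hessenberg. Qed.

Lemma aleph_lt n T U (K : set T) (K2 : set U) :
  is_aleph n K -> is_aleph n.+1 K2 -> card_lt K K2.
Proof.
move=> hK [T' [A [hA [AK2 nK2A] _]]]; split.
  exact: cle_trans (aleph_le hK hA) AK2.
by move=> K2K; apply: nK2A; apply: cle_trans K2K (aleph_le hK hA).
Qed.

Lemma aleph_next n T U V (K : set T) (K2 : set U) (Xs : set V) :
  is_aleph n K -> is_aleph n.+1 K2 -> ~ (Xs #<= K) -> K2 #<= Xs.
Proof.
move=> hK hK2 nXK; have [T' [A [hA _ min2]]] := hK2.
case: (cmp Xs K) => // KX.
apply: min2; split.
  exact: cle_trans (aleph_le hA hK) KX.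
by move=> XA; apply: nXK; apply: cle_trans XA (aleph_le hA hK).
Qed.

Lemma aleph_mono i j T U (K : set T) (K' : set U) :
  (i <= j)%N -> is_aleph i K -> is_aleph j K' -> K #<= K'.
Proof.
elim: j U K' => [|j IH] U K'.
  by rewrite leqn0 => /eqP -> hK hK'; apply: aleph_le hK hK'.
rewrite leq_eqVlt => /orP [/eqP -> hK hK'|]; first exact: aleph_le hK hK'.
rewrite ltnS => ij hK [T2 [A2 [hA2 [A2K' _] _]]].
exact: cle_trans (IH _ _ ij hK hA2) A2K'.
Qed.


Lemma min_nat (P : nat -> Prop) :
  (exists k, P k) -> exists k, P k /\ forall k', P k' -> (k <= k')%N.
Proof.
move=> [k Pk]; apply: contrapT => nmin.
suff : forall n k, (k <= n)%N -> ~ P k by move=> /(_ k k (leqnn k)).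
elim=> [|n IH] k'.
  by rewrite leqn0 => /eqP -> P0; apply: nmin; exists 0%N; split.
rewrite leq_eqVlt => /orP [/eqP -> Pn|]; last by rewrite ltnS; apply: IH.
apply: nmin; exists n.+1; split => // k'' Pk''.
case: (leqP n.+1 k'') => // lt; exfalso; apply: (IH k'') => //.
Qed.

Lemma reg_pig n Tk Tk2 T U (K : set Tk) (K2 : set Tk2) (Bk : set U) (A : set T)
    (g : U -> T) :
  is_aleph n K -> is_aleph n.+1 K2 -> K2 #<= Bk -> A #<= K -> mapsto Bk A g ->
  exists x, A x /\ K2 #<= [set b | Bk b /\ g b = x].
Proof.
move=> hK hK2 K2B AK mg; apply: contrapT => nx.
have fib : forall x, A x -> [set b | Bk b /\ g b = x] #<= K.
  move=> x Ax; apply: contrapT => nle; apply: nx; exists x; split => //.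
  exact: aleph_next hK hK2 nle.
have BK : Bk #<= K.
  apply: cle_trans (UL AK fib (aleph_sq hK)).
  by apply: cle_sub => b Bb; exists (g b); [apply: mg|].
have [_ nK2K] := aleph_lt hK hK2.
by apply: nK2K; apply: cle_trans K2B BK.
Qed.

Lemma below_omega T U (A : set T) (B : set U) :
  card_lt A B -> le_aleph_omega B ->
  exists j (Tj : Type) (K : set Tj), is_aleph j K /\ A #<= K.
Proof.
move=> [AB nBA] [W [S [abS minS BS]]]; apply: contrapT => nj.
apply: nBA; apply: cle_trans BS _; apply: minS => m.
have [Tm [Km [hKm KmS]]] := abS m.
exists Tm, Km; split => //.
case: (cmp A Km) => // AKm; exfalso; apply: nj.
by exists m, Tm, Km.
Qed.

Lemma pig T U (A : set T) (B : set U) (g : U -> T) :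
  card_lt A B -> le_aleph_omega B -> ~ countable B -> mapsto B A g ->
  exists Xc : set T, [/\ Xc `<=` A, countable Xc &
                        B #<= [set b | B b /\ Xc (g b)]].
Proof.
move=> ltAB leB ncB mg.
have [j [Tj [Kj [hKj AKj]]]] := below_omega ltAB leB.
have [W [S [abS minS BS]]] := leB.
have [AB nBA] := ltAB.
case: (pselect (exists k (Tk : Type) (K : set Tk), is_aleph k K /\ B #<= K)) => [hex|nex].
  have [k [[Tk [K [hK BK]]] kmin]] := min_nat hex.
  case: k hK BK kmin => [|k] hK BK kmin.
    by exfalso; apply: ncB; apply: cle_trans BK _; case/card_eqPle: hK.
  have [Tk' [K' [hK' _ _]]] := hK.
  have nBK' : ~ (B #<= K').
    move=> BK'; have hk : (k < k)%N by apply: kmin; exists Tk', K'.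
    by rewrite ltnn in hk.
  have KB := aleph_next hK' hK nBK'.
  have AK' : A #<= K'.
    apply: contrapT => nAK'; apply: nBA; apply: cle_trans BK _.
    exact: aleph_next hK' hK nAK'.
  have [x [Ax Kfib]] := reg_pig hK' hK KB AK' mg.
  exists [set x]; split.
  - by move=> _ ->.
  - exact: countable1.
  - apply: cle_trans BK _; apply: cle_trans Kfib _.
    by apply: cle_sub => b [Bb <-].
have allB : forall k (Tk : Type) (K : set Tk), is_aleph k K -> K #<= B.
  move=> k Tk K hK; case: (cmp B K) => // BK; exfalso; apply: nex.
  by exists k, Tk, K.
have : forall n, exists x, A x /\ exists (T2 : Type) (K2 : set T2),
    is_aleph (j + n).+1 K2 /\ K2 #<= [set b | B b /\ g b = x].
  move=> n.
  have [T2 [K2 [hK2 _]]] := abS (j + n).+1.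
  have [T1 [K1 [hK1 _ _]]] := hK2.
  have K2B : K2 #<= B := allB _ _ _ hK2.
  have AK1 : A #<= K1.
    apply: cle_trans AKj _; apply: aleph_mono hKj hK1.
    exact: leq_addr.
  have [x [Ax hx]] := reg_pig hK1 hK2 K2B AK1 mg.
  by exists x; split => //; exists T2, K2.
case/choice => xs hxs.
exists (xs @` setT); split.
- by move=> _ [n _ <-]; have [] := hxs n.
- exact: cle_img.
- apply: cle_trans BS _; apply: minS => m.
  have [Tm [Km [hKm _]]] := abS m.
  have [_ [T2 [K2 [hK2 K2le]]]] := hxs m.
  exists Tm, Km; split => //.
  apply: cle_trans (aleph_mono _ hKm hK2) _.
    exact: leq_trans (leq_addl j m) (leqnSn _).
  apply: cle_trans K2le _; apply: cle_sub => b [Bb gb]; split => //=; rewrite gb.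
  by exists m.
Qed.


Lemma wo_exists (T : Type) : exists R : T -> T -> Prop,
  [/\ (forall x, R x x), (forall x y, R x y \/ R y x),
      (forall x y, R x y -> R y x -> x = y),
      (forall x y z, R x y -> R y z -> R x z) &
      (forall P : set T, (exists x, P x) -> exists x, P x /\ forall y, P y -> R x y)].
Proof.
have [R wR] := well_ordering_principle {classic T}.
have minP : forall P : set T, (exists x, P x) ->
    exists x, [/\ P x, (forall y, P y -> R x y) &
                forall z, P z -> (forall y, P y -> R z y) -> x = z].
  move=> P [x0 Px0].
  have ne : nonempty (fun x : {classic T} => `[< P x >]).
    by exists x0; rewrite unfold_in; apply/asboolP.
  have [z [[Pz lbz] uz]] := wR _ ne.
  exists z; split.
  - by move: Pz; rewrite unfold_in => /asboolP.
  - by move=> y Py; apply: lbz; rewrite unfold_in; apply/asboolP.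
  - move=> z' Pz' lbz'; apply: uz; split.
      by rewrite unfold_in; apply/asboolP.
    by move=> y; rewrite unfold_in => /asboolP; apply: lbz'.
have refl : forall x, R x x.
  move=> x; have [z [-> h _]] := minP (fun z => z = x) (ex_intro _ x erefl).
  exact: h.
have tot : forall x y, R x y \/ R y x.
  move=> x y.
  have [z [[->|->] h _]] := minP (fun z => z = x \/ z = y) (ex_intro _ x (or_introl erefl)).
    by left; apply: h; right.
  by right; apply: h; left.
have anti : forall x y, R x y -> R y x -> x = y.
  move=> x y Rxy Ryx.
  have [z [[->|->] h u]] := minP (fun z => z = x \/ z = y) (ex_intro _ x (or_introl erefl)).
    by apply: u; [right|move=> w [->|->]].
  by symmetry; apply: u; [left|move=> w [->|->]].
exists (fun x y => R x y); split => //.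
- move=> x y z Rxy Ryz.
  have ex3 : exists w, [\/ w = x, w = y | w = z] by exists x; apply: Or31.
  have [m [[->|->|->] h _]] := minP _ ex3.
  + by apply: h; apply: Or33.
  + have Ryx : R y x by apply: h; apply: Or31.
    by rewrite (anti _ _ Rxy Ryx).
  + have Rzy : R z y by apply: h; apply: Or32.
    by rewrite -(anti _ _ Ryz Rzy).
- by move=> P /minP [x [Px h _]]; exists x.
Qed.


Lemma seg_family m Tk Tk2 T (K : set Tk) (K2 : set Tk2) (A : set T) :
  is_aleph m K -> is_aleph m.+1 K2 -> A #<= K2 -> ~ (A #<= K) ->
  exists (I : set T) (S : T -> set T),
   [/\ I `<=` A, (forall x, I x -> S x `<=` A /\ S x #<= K),
       (forall a, A a -> exists x, I x /\ S x a) &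
       (forall Xc, Xc `<=` I -> countable Xc ->
          exists z, I z /\ forall x, Xc x -> S x `<=` S z)].
Proof.
move=> hK hK2 AK2 nAK.
have nK := aleph_inf hK.
have KK := aleph_sq hK.
have [R [Rrefl Rtot Ranti Rtrans Rmin]] := wo_exists T.
pose seg x := [set y | A y /\ R y x /\ y <> x].
have [I [h [IA mh ih segK]]] : exists (I : set T) (h : T -> T),
    [/\ I `<=` A, mapsto A I h, injon A h & forall x, I x -> seg x #<= K].
  case: (pselect (exists x, A x /\ ~ (seg x #<= K))) => [hex|nex]; last first.
    exists A, id; split => // x Ax; apply: contrapT => nle; apply: nex.
    by exists x.
  have [x0 [[Ax0 nx0] x0min]] := Rmin _ hex.
  have K2s : K2 #<= seg x0 := aleph_next hK hK2 nx0.
  have [h [mh ih]] := cle_elim_ne Ax0 (cle_trans AK2 K2s).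
  exists (seg x0), h; split => //.
  - by move=> x [].
  - move=> x [Ax [Rxx0 nxx0]]; apply: contrapT => nle.
    by apply: nxx0; apply: Ranti => //; apply: x0min.
pose S x := [set a | A a /\ A (h a) /\ R (h a) x].
have SA x : S x `<=` A by move=> a [].
have Schain x y : I x -> I y -> S x `<=` S y \/ S y `<=` S x.
  move=> _ _; case: (Rtot x y) => Rxy; [left|right] => a [Aa [Aha Rha]];
  by split => //; split => //; apply: Rtrans Rxy.
have SK x : I x -> S x #<= K.
  move=> Ix.
  apply: cle_trans (_ : [set y | A y /\ R y x] #<= K).
    apply: (cle_intro (f := h)); first by move=> a [_ [Aha Rha]].
    by move=> a b [Aa _] [Ab _]; apply: ih.
  apply: cle_trans (union2 (segK x Ix) (cle_trans (countable1 x) nK) nK KK).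
  apply: cle_sub => y [Ay Ryx]; case: (pselect (y = x)) => [->|nyx].
    by right.
  by left.
exists I, S; split => //.
- by move=> x Ix; split => //; apply: SK.
- move=> a Aa; exists (h a); split; first exact: mh.
  by split => //; split; [apply: IA; apply: mh|apply: Rrefl].
- move=> Xc XcI cXc; apply: contrapT => nz; apply: nAK.
  have XcK : Xc #<= K := cle_trans cXc nK.
  apply: cle_trans (UL XcK (fun x Xx => SK x (XcI x Xx)) KK).
    apply: cle_sub => a Aa.
    have [z [Iz Sza]] : exists z, I z /\ S z a.
      by exists (h a); split; [apply: mh|split => //; split; [apply: IA; apply: mh|apply: Rrefl]].
    apply: contrapT => nU; apply: nz; exists z; split => // x Xx.
    case: (Schain x z (XcI _ Xx) Iz) => // Szx; exfalso; apply: nU.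
  by exists x => //; apply: Szx.
Qed.

Lemma main_ind T U (N : U -> set T) m : forall Tk (K : set Tk) (A : set T) (B : set U),
  is_aleph m K -> A #<= K -> card_lt A B -> le_aleph_omega B -> ~ countable B ->
  (forall b, B b -> N b `<=` A /\ countable (N b)) ->
  exists C D, [/\ C `<=` A, countable C, D `<=` B, B #<= D &
                  forall d, D d -> N d `<=` C].
Proof.
elim: m => [|m IH] Tk K A B hK AK ltAB leB ncB hN.
  exists A, B; split => //.
  - by apply: cle_trans AK _; case/card_eqPle: hK.
  - by move=> d /hN [].
have [Tk' [K' [hK' _ _]]] := hK.
case: (pselect (A #<= K')) => [AK'|nAK'].
  exact: IH hK' AK' ltAB leB ncB hN.
have [I [S [IA SAK cover bound]]] := seg_family hK' hK AK nAK'.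
have [t0 At0] : exists t, A t.
  apply: nonemptyP => A0; apply: nAK'; rewrite A0; exact: card_ge0.
have : forall a, exists x, A a -> I x /\ S x a.
  move=> a; case: (pselect (A a)) => Aa; last by exists a.
  by have [x hx] := cover a Aa; exists x.
case/choice => iota hiota.
have : forall b, exists z, B b -> I z /\ N b `<=` S z.
  move=> b; case: (pselect (B b)) => Bb; last by exists t0.
  have [NA cN] := hN b Bb.
  have [z [Iz hz]] : exists z, I z /\ forall x, (iota @` N b) x -> S x `<=` S z.
    apply: bound.
      by move=> _ [y Ny <-]; have [] := hiota y (NA y Ny).
    exact: cle_trans (cle_img iota (N b)) cN.
  exists z => _; split => // y Ny.
  have [_ Sy] := hiota y (NA y Ny).
  by apply: (hz (iota y)) => //; exists y.
case/choice => g hg.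
have [AB nBA] := ltAB.
have ltIB : card_lt I B.
  split; first exact: cle_trans (cle_sub IA) AB.
  by move=> BI; apply: nBA; apply: cle_trans BI (cle_sub IA).
have mg : mapsto B I g by move=> b Bb; have [] := hg b Bb.
have [Xc [XcI cXc BD0]] := pig ltIB leB ncB mg.
have [z [Iz hz]] := bound Xc XcI cXc.
pose D0 := [set b | B b /\ Xc (g b)].
have [SzA SzK] := SAK z Iz.
have ltSD : card_lt (S z) D0.
  split; first by apply: cle_trans (cle_sub SzA) (cle_trans AB BD0).
  move=> DS; apply: nBA; apply: cle_trans BD0 (cle_trans DS (cle_sub SzA)).
have leD : le_aleph_omega D0.
  have [W [S' [abS minS BS]]] := leB.
  exists W, S'; split => //.
  exact: cle_trans (cle_sub (fun b (h : D0 b) => h.1)) BS.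
have ncD : ~ countable D0 by move=> cD; apply: ncB; apply: cle_trans BD0 cD.
have hN' : forall b, D0 b -> N b `<=` S z /\ countable (N b).
  move=> b [Bb Xg]; split; last by have [] := hN b Bb.
  move=> y Ny; apply: (hz (g b) Xg); have [_ +] := hg b Bb; apply.
  exact: Ny.
have [C [D [CS cC DD0 D0D hD]]] := IH _ _ _ _ hK' SzK ltSD leD ncD hN'.
exists C, D; split => //.
- by move=> a /CS /SzA.
- by move=> d /DD0 [].
- exact: cle_trans BD0 D0D.
Qed.


Unset Implicit Arguments.

Theorem corollary4p2 (T U : Type) (A : set T) (B : set U) (E : T -> U -> Prop) :
  infinite_set A ->
  card_lt A B ->
  le_aleph_omega B ->
  (forall b, B b -> infinite_set (nbhd A E b)) ->
  exists (C : set T) (D : set U),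
    [/\ C `<=` A, D `<=` B, C #= [set: nat], D #= B &
        forall d, D d -> infinite_set (nbhd C E d)].
Proof.
move=> infA ltAB leB hE.
have nA : [set: nat] #<= A by apply/infiniteP.
have [AB nBA] := ltAB.
have ncB : ~ countable B by move=> cB; apply: nBA; apply: cle_trans cB nA.
have : forall b, exists Nb : set T, B b ->
    [/\ Nb `<=` nbhd A E b, countable Nb & [set: nat] #<= Nb].
  move=> b; case: (pselect (B b)) => Bb; last by exists set0.
  have /infiniteP nN := hE b Bb.
  have [f [mf inf]] := cle_elim_ne (a := 0%N) I nN.
  exists (f @` setT) => _; split.
  - by move=> _ [n _ <-]; apply: mf.
  - exact: cle_img.
  - by apply: cle_img_inj => x y _ _; apply: inf.
case/choice => N hN.
have [j [Tj [Kj [hKj AKj]]]] := below_omega ltAB leB.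
have hN' : forall b, B b -> N b `<=` A /\ countable (N b).
  move=> b Bb; have [NA cN _] := hN b Bb; split => //.
  by move=> y /NA [].
have [C [D [CA cC DB BD hD]]] := main_ind hKj AKj ltAB leB ncB hN'.
have [d0 Dd0] : exists d, D d.
  apply: nonemptyP => D0; apply: ncB; rewrite D0 in BD.
  by move/card_le0P: BD => ->; apply: card_ge0.
have [_ _ nNd0] := hN d0 (DB _ Dd0).
exists C, D; split => //.
- apply/card_eqPle; split => //.
  exact: cle_trans nNd0 (cle_sub (hD d0 Dd0)).
- by apply/card_eqPle; split => //; apply: cle_sub.
- move=> d Dd; apply/infiniteP.
  have [NA _ nNd] := hN d (DB _ Dd).
  apply: cle_trans nNd _; apply: cle_sub => y Ny; split.
    exact: hD d Dd y Ny.
  by have [_ ] := NA y Ny.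
Qed.
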